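(* For every integer $n \ge 2$ and every weighted undirected graph $G=(V,w)$ on $n$ vertices, $\mathrm{cdim}(G) \le 2n-3$.
   Context: A weighted undirected graph $G=(V,w)$ consists of a finite vertex set $V$ and a weight function $w$ assigning a nonnegative real number to each unordered pair $\{x,y\}$ of distinct vertices (an ''edge slot''). The edge set is $E=\{e : w(e)>0\}$, and $m=|E|$. For $\emptyset \ne X \subsetneq V$, $\Delta(X)$ denotes the set of edges of $E$ with exactly one endpoint in $X$; such a set is a cut with shores $X$ and $V\setminus X$, and its weight is $w(\Delta(X))=\sum_{e\in\Delta(X)} w(e)$. A minimum cut (mincut) is a cut of minimum weight; $\mathcal{M}(G)$ is the set of mincuts. For $S\subseteq E$, $\chi(S)\in\{0,1\}^m$ is its characteristic vector indexed by the edges in $E$. The cut dimension is $\mathrm{cdim}(G)=\dim\,\mathrm{span}\{\chi(S): S\in\mathcal{M}(G)\}$. *)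

(* Defs.v *)
From mathcomp Require Import all_boot all_order all_algebra.
Set Implicit Arguments. Unset Strict Implicit. Unset Printing Implicit Defensive.
Import Order.TTheory GRing.Theory Num.Theory.
Local Open Scope ring_scope.

Section CutDim.
Variables (R : realFieldType) (n : nat) (w : 'I_n -> 'I_n -> R).

(* Vertex set V = 'I_n.  An unordered pair {x,y} (x <> y) is represented
   once, as the ordered pair (x,y) with x < y; its weight is w x y. *)

Definition edges : {set 'I_n * 'I_n} :=
  [set e : 'I_n * 'I_n | (e.1 < e.2)%N && (0 < w e.1 e.2)].

Definition in_cut (X : {set 'I_n}) (e : 'I_n * 'I_n) : bool :=
  (e \in edges) && ((e.1 \in X) != (e.2 \in X)).

Definition cut_weight (X : {set 'I_n}) : R :=
  \sum_(e in edges | in_cut X e) w e.1 e.2.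

Definition shore (X : {set 'I_n}) : bool := (X != set0) && (X != setT).

Definition is_mincut_shore (X : {set 'I_n}) : bool :=
  shore X && [forall Y : {set 'I_n}, shore Y ==> (cut_weight X <= cut_weight Y)].

(* Matrix whose rows are the characteristic vectors chi(Delta(X)) in R^m
   (columns indexed by the m edges of E), one row per shore X of a mincut,
   and zero rows for the other subsets X. *)
Definition mincut_matrix : 'M[R]_(#|{: {set 'I_n}}|, #|edges|) :=
  \matrix_(i, j)
    (if is_mincut_shore (enum_val i) && in_cut (enum_val i) (enum_val j)
     then 1 else 0).

Definition cdim : nat := \rank mincut_matrix.

End CutDim.

(* Main.v *)
Require Import Defs.
From mathcomp Require Import all_boot all_order all_algebra.
From mathcomp Require Import zify lra.
Set Implicit Arguments. Unset Strict Implicit. Unset Printing Implicit Defensive.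
Import Order.TTheory GRing.Theory Num.Theory.



Definition cross {T : finType} (X Y : {set T}) :=
  [&& X :&: Y != set0, ~~ (X \subset Y) & ~~ (Y \subset X)].

Lemma crossC {T : finType} (X Y : {set T}) : cross X Y = cross Y X.
Proof. by rewrite /cross setIC; case: (_ \subset _); case: (_ \subset _); rewrite ?andbF ?andbT. Qed.

Lemma nocrossP {T : finType} (X Y : {set T}) : ~~ cross X Y ->
  [\/ X :&: Y = set0, X \subset Y | Y \subset X].
Proof.
rewrite /cross; case: eqP => [->|_] /=; first by constructor.
case: (X \subset Y) => /=; first by constructor 2.
by case: (Y \subset X) => //= _; constructor 3.
Qed.

Lemma cross_I {T : finType} (Z X Y : {set T}) : ~~ cross Z X -> cross Z (X :&: Y) -> cross Z Y.
Proof.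
move=> /nocrossP nc /and3P[h1 h2 h3].
have g1 : Z :&: Y != set0.
  apply: contraNneq h1 => e; apply/eqP; apply/setP => x; rewrite !inE.
  by move/setP: e => /(_ x); rewrite !inE; case: (x \in Z); case: (x \in X); case: (x \in Y).
have g3 : ~~ (Y \subset Z).
  apply: contra h3 => s; apply: subset_trans s; exact: subsetIr.
apply/and3P; split => //.
case: nc => [e | s | s].
- case/set0Pn: h1 => x; rewrite !inE => /and3P[a b c].
  by move/setP: e => /(_ x); rewrite !inE a b.
- by apply: contra h2 => s'; rewrite subsetI s s'.
- by case/negP: h3; apply: subset_trans s; exact: subsetIl.
Qed.

Lemma cross_U {T : finType} (Z X Y : {set T}) : cross X Y -> ~~ cross Z X -> cross Z (X :|: Y) -> cross Z Y.
Proof.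
move=> /and3P[k1 _ _] /nocrossP nc /and3P[h1 h2 h3].
have g2 : ~~ (Z \subset Y).
  apply: contra h2 => s; exact: subset_trans s (subsetUr _ _).
case: nc => [e | s | s].
- apply/and3P; split => //.
  + apply: contraNneq h1 => e'; apply/eqP; apply/setP => x; rewrite !inE.
    move/setP: e => /(_ x); move/setP: e' => /(_ x); rewrite !inE.
    by case: (x \in Z); case: (x \in X); case: (x \in Y).
  + apply/negP => s; case/set0Pn: k1 => x; rewrite !inE => /andP[a b].
    move/subsetP: s => /(_ x b) c.
    by move/setP: e => /(_ x); rewrite !inE a c.
- by case/negP: h2; exact: subset_trans s (subsetUl _ _).
- apply/and3P; split => //.
  + case/set0Pn: k1 => x; rewrite !inE => /andP[a b].
    apply/set0Pn; exists x; rewrite !inE b andbT.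
    by move/subsetP: s => /(_ x a).
  + by apply: contra h3 => s'; rewrite subUset s s'.
Qed.

Lemma lam_count {T : finType} (k : nat) (U : {set T}) (L : {set {set T}}) :
  #|U| <= k -> U != set0 ->
  (forall X, X \in L -> (X != set0) && (X \subset U)) ->
  (forall X Y, X \in L -> Y \in L -> ~~ cross X Y) ->
  #|L| + (U \notin L) <= (2 * #|U|).-1.
Proof.
elim: k U L => [|k IH] U L hk hU hL hc.
  by move: hk; rewrite leqn0 cards_eq0 (negbTE hU).
have hU1 : 0 < #|U| by rewrite card_gt0.
have sub : forall L0 : {set {set T}}, L0 \subset L -> U \notin L0 ->
    #|L0| <= (2 * #|U|) - 2.
  move=> L0 sL0 nU.
  case: (set_0Vmem L0) => [->|[X0 X0in]]; first by rewrite cards0.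
  case: (arg_maxnP (fun X : {set T} => #|X|) X0in) => M Min Mmax.
  have /andP[M0 MU] := hL M (subsetP sL0 M Min).
  have MneU : M != U by apply: contraNneq nU => <-.
  have Mprop : M \proper U by rewrite properEneq MneU MU.
  have DU : U :\: M \proper U.
    rewrite properEneq subsetDl andbT; apply: contraNneq M0 => e.
    apply/eqP/setP => x; rewrite inE; apply/negP => xM.
    have xU := subsetP MU x xM.
    by move/setP: e => /(_ x); rewrite !inE xM xU.
  have cM := proper_card Mprop.
  have cD := proper_card DU.
  have D0 : U :\: M != set0.
    apply/negP => /eqP e; move: (cardsID M U); rewrite e cards0 addn0.
    by rewrite (setIidPr MU) => e'; move: cM; rewrite e' ltnn.
  set L1 := [set X in L0 | X \subset M].
  set L2 := [set X in L0 | X \subset U :\: M].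
  have c1 := IH M L1 (ltnSE (leq_trans cM hk)) M0.
  have c2 := IH (U :\: M) L2 (ltnSE (leq_trans cD hk)) D0.
  have hL1 : forall X, X \in L1 -> (X != set0) && (X \subset M).
    by move=> X; rewrite inE => /andP[/(subsetP sL0)/hL/andP[-> _] ->].
  have hL2 : forall X, X \in L2 -> (X != set0) && (X \subset U :\: M).
    by move=> X; rewrite inE => /andP[/(subsetP sL0)/hL/andP[-> _] ->].
  have hc1 : forall X Y, X \in L1 -> Y \in L1 -> ~~ cross X Y.
    move=> X Y; rewrite !inE => /andP[/(subsetP sL0) ? _] /andP[/(subsetP sL0) ? _].
    exact: hc.
  have hc2 : forall X Y, X \in L2 -> Y \in L2 -> ~~ cross X Y.
    move=> X Y; rewrite !inE => /andP[/(subsetP sL0) ? _] /andP[/(subsetP sL0) ? _].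
    exact: hc.
  move: (c1 hL1 hc1) (c2 hL2 hc2) => {}c1 {}c2.
  have sU : L0 \subset L1 :|: L2.
    apply/subsetP => X XL0; rewrite !inE XL0 /=.
    have XL := subsetP sL0 X XL0.
    have /andP[_ XU] := hL X XL.
    case/nocrossP: (hc X M XL (subsetP sL0 M Min)) => [e|->//|s].
    + apply/orP; right; apply/subsetP => x xX; rewrite inE (subsetP XU x xX) andbT.
      by apply/negP => xM; move/setP: e => /(_ x); rewrite !inE xX xM.
    + have := Mmax X XL0; move=> le.
      have e : M == X by rewrite eqEcard s; exact: le.
      by rewrite -(eqP e) subxx.
  have c1' : #|L1| <= (2*#|M|).-1 by apply: leq_trans c1; rewrite leq_addr.
  have c2' : #|L2| <= (2*#|U :\: M|).-1 by apply: leq_trans c2; rewrite leq_addr.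
  have c3 : #|L0| <= #|L1| + #|L2|.
    by apply: leq_trans (subset_leq_card sU) _; rewrite cardsU leq_subr.
  move: (cardsID M U); rewrite (setIidPr MU) => e.
  have p1 : 0 < #|M| by rewrite card_gt0.
  have p2 : 0 < #|U :\: M| by rewrite card_gt0.
  clear -c1' c2' c3 e p1 p2.
  move: c1' c2' c3 e p1 p2; move: #|L1| #|L2| #|L0| #|M| #|U :\: M| #|U|.
  move=> a b c d f g; lia.
case: (boolP (U \in L)) => UL.
- rewrite (cardsD1 U L) UL /=.
  have := sub (L :\ U) (subsetDl _ _); rewrite !inE eqxx /= => /(_ isT).
  clear -hU1; move: #|L :\ U| #|U| hU1 => a b; rewrite addn0; lia.
- have := sub L (subxx _) UL; idtac.
  clear -hU1; move: #|L| #|U| hU1 => a b; lia.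
Qed.

Local Open Scope ring_scope.

Lemma span_lam (R : fieldType) (T : finType) (m : nat)
  (chi : {set T} -> 'rV[R]_m) (M : {set {set T}}) :
  (forall X Y, X \in M -> Y \in M -> cross X Y ->
     [/\ X :&: Y \in M, X :|: Y \in M & chi X + chi Y = chi (X :&: Y) + chi (X :|: Y)]) ->
  exists L : {set {set T}}, [/\ L \subset M,
    (forall X Y, X \in L -> Y \in L -> ~~ cross X Y) &
    forall Y, Y \in M -> (chi Y <= \matrix_(i < #|L|) chi (enum_val i))%MS].
Proof.
move=> Hunc.
pose fam := [set L : {set {set T}} | (L \subset M) &&
   [forall X in L, forall Y in L, ~~ cross X Y]].
have f0 : set0 \in fam.
  by rewrite inE sub0set; apply/forall_inP => X; rewrite inE.
case: (arg_maxnP (fun L : {set {set T}} => #|L|) f0) => L.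
move=> hLf Lmax; have : L \in fam := hLf.
rewrite inE => /andP[LM /forall_inP Lc].
have Lc' : forall X Y, X \in L -> Y \in L -> ~~ cross X Y.
  by move=> X Y XL YL; move/forall_inP: (Lc X XL) => /(_ Y YL).
exists L; split => //.
set S := \matrix_(i < #|L|) chi (enum_val i).
have rowL : forall Y, Y \in L -> (chi Y <= S)%MS.
  move=> Y YL; rewrite -(enum_rankK_in YL YL).
  by rewrite -(rowK (fun i : 'I_#|L| => chi (enum_val i))); exact: row_sub.
pose cnt Y := #|[set X in L | cross X Y]|.
suff H : forall (c : nat) Y, (cnt Y <= c)%N -> Y \in M -> (chi Y <= S)%MS.
  by move=> Y YM; apply: (H (cnt Y)).
elim=> [|c IH] Y hc YM.
- apply: rowL; apply/negPn/negP => YL.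
  have : Y |: L \in fam.
    rewrite inE subUset sub1set YM LM /=.
    apply/forall_inP => X; move=> /setU1P[->|XL];
      apply/forall_inP => Z; move=> /setU1P[->|ZL].
    + by rewrite /cross subxx andbF.
    + rewrite crossC; apply/negP => cr.
      move: hc; rewrite leqn0 cards_eq0 => /eqP/setP/(_ Z).
      by rewrite !inE ZL cr.
    + apply/negP => cr.
      move: hc; rewrite leqn0 cards_eq0 => /eqP/setP/(_ X).
      by rewrite !inE XL cr.
    + exact: Lc'.
  move/Lmax; rewrite cardsU1 (negbTE YL) /=.
  by rewrite ltnn.
- case: (set_0Vmem [set X in L | cross X Y]) => [e|[X]].
  + by apply: (IH Y) => //; rewrite /cnt e cards0.
  rewrite inE => /andP[XL cXY].
  have XM := subsetP LM X XL.
  case: (Hunc X Y XM YM cXY) => IM UM e.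
  have -> : chi Y = chi (X :&: Y) + chi (X :|: Y) - chi X.
    by rewrite -e addrC addKr.
  have lt1 : (cnt (X :&: Y) < cnt Y)%N.
    apply: proper_card; apply/properP; split.
      apply/subsetP => Z; rewrite !inE => /andP[ZL cZ]; rewrite ZL /=.
      exact: cross_I (Lc' Z X ZL XL) cZ.
    exists X; first by rewrite !inE XL cXY.
    by rewrite !inE XL /= /cross subsetIl !andbF.
  have lt2 : (cnt (X :|: Y) < cnt Y)%N.
    apply: proper_card; apply/properP; split.
      apply/subsetP => Z; rewrite !inE => /andP[ZL cZ]; rewrite ZL /=.
      exact: cross_U cXY (Lc' Z X ZL XL) cZ.
    exists X; first by rewrite !inE XL cXY.
    by rewrite !inE XL /= /cross subsetUl !andbF.
  apply: addmx_sub; first apply: addmx_sub.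
  + by apply: IH IM; rewrite -ltnS (leq_trans lt1 hc).
  + by apply: IH UM; rewrite -ltnS (leq_trans lt2 hc).
  + by rewrite (eqmx_opp (chi X)); exact: rowL.
Qed.


Definition sep {n : nat} (Z : {set 'I_n}) (e : 'I_n * 'I_n) := (e.1 \in Z) != (e.2 \in Z).

Lemma cwE (R : realFieldType) (n : nat) (w : 'I_n -> 'I_n -> R) Z : cut_weight w Z =
  \sum_(e in edges w) (if sep Z e then w e.1 e.2 else 0).
Proof.
rewrite /cut_weight big_mkcondr /=; apply: eq_bigr => e eE.
by rewrite /in_cut eE.
Qed.

Lemma wpos (R : realFieldType) (n : nat) (w : 'I_n -> 'I_n -> R) e : e \in edges w -> 0 < w e.1 e.2.
Proof. by rewrite inE => /andP[]. Qed.

Lemma cut_setC (R : realFieldType) (n : nat) (w : 'I_n -> 'I_n -> R) X : cut_weight w (~: X) = cut_weight w X.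
Proof.
rewrite !cwE; apply: eq_bigr => e _; rewrite /sep !inE.
by case: (e.1 \in X); case: (e.2 \in X).
Qed.

Lemma mincut_setC (R : realFieldType) (n : nat) (w : 'I_n -> 'I_n -> R) X : is_mincut_shore w X -> is_mincut_shore w (~: X).
Proof.
case/andP => /andP[X0 XT] /forall_inP Hm; apply/andP; split.
  have e1 : (~: X != set0) = (X != setT) by rewrite -setCT (inj_eq (@setC_inj _)).
  have e2 : (~: X != setT) = (X != set0) by rewrite -setC0 (inj_eq (@setC_inj _)).
  by rewrite /shore e1 e2 X0 XT.
by apply/forall_inP => Y /Hm; rewrite cut_setC.
Qed.

Definition chi (R : realFieldType) (n : nat) (w : 'I_n -> 'I_n -> R) (X : {set 'I_n}) : 'rV[R]_(#|edges w|) :=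
  \row_j (if in_cut w X (enum_val j) then 1 else 0).

Lemma chi_setC (R : realFieldType) (n : nat) (w : 'I_n -> 'I_n -> R) X : chi w (~: X) = chi w X.
Proof.
apply/rowP => j; rewrite !mxE /in_cut !inE.
by case: (enum_val j \in edges w); case: ((enum_val j).1 \in X); case: ((enum_val j).2 \in X).
Qed.

Lemma row_mincut (R : realFieldType) (n : nat) (w : 'I_n -> 'I_n -> R) i : row i (mincut_matrix w) =
  if is_mincut_shore w (enum_val i) then chi w (enum_val i) else 0.
Proof.
apply/rowP => j; rewrite !mxE.
by case: (is_mincut_shore w (enum_val i)); rewrite ?mxE.
Qed.

Definition dd {n : nat} (X Y : {set 'I_n}) (e : 'I_n * 'I_n) :=
  [&& (e.1 \in X) != (e.1 \in Y), (e.2 \in X) != (e.2 \in Y) &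
      (e.1 \in X) != (e.2 \in X)].

Lemma cw_uncross (R : realFieldType) (n : nat) (w : 'I_n -> 'I_n -> R) X Y :
  cut_weight w X + cut_weight w Y =
  cut_weight w (X :&: Y) + cut_weight w (X :|: Y) +
  ((\sum_(e in edges w) if dd X Y e then w e.1 e.2 else 0) +
   (\sum_(e in edges w) if dd X Y e then w e.1 e.2 else 0)).
Proof.
rewrite !cwE -!big_split /=; apply: eq_bigr => e _.
rewrite /sep /dd !inE.
case: (e.1 \in X); case: (e.1 \in Y); case: (e.2 \in X); case: (e.2 \in Y);
  rewrite /= ?addr0 ?add0r //.
Qed.


Lemma unc (R : realFieldType) (n : nat) (w : 'I_n -> 'I_n -> R) (r : 'I_n) X Y : is_mincut_shore w X -> r \notin X ->
  is_mincut_shore w Y -> r \notin Y -> cross X Y ->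
  [/\ is_mincut_shore w (X :&: Y), is_mincut_shore w (X :|: Y) &
      chi w X + chi w Y = chi w (X :&: Y) + chi w (X :|: Y)].
Proof.
move=> /andP[sX /forall_inP mX] rX /andP[sY /forall_inP mY] rY /and3P[I0 _ _].
have notT : forall Z : {set 'I_n}, r \notin Z -> Z != setT.
  by move=> Z rZ; apply: contraNneq rZ => ->; rewrite inE.
have sI : shore (X :&: Y).
  by rewrite /shore I0 notT // inE negb_and rX.
have sU : shore (X :|: Y).
  rewrite /shore notT ?inE ?negb_or ?rX ?rY // andbT.
  apply: contraNneq (proj1 (andP sX)) => e; apply/eqP/setP => x.
  by move/setP: e => /(_ x); rewrite !inE; case: (x \in X).
have hXY := mX Y sY; have hYX := mY X sX.
have hI := mX _ sI; have hU := mX _ sU.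
set D := \sum_(e in edges w) if dd X Y e then w e.1 e.2 else 0.
have D0 : 0 <= D.
  by apply: sumr_ge0 => e eE; case: ifP => // _; apply: ltW; apply: wpos.
have E := cw_uncross w X Y; rewrite -/D in E.
have DZ : D = 0 by lra.
have eI : cut_weight w (X :&: Y) = cut_weight w X by lra.
have eU : cut_weight w (X :|: Y) = cut_weight w X by lra.
have nd : forall e, e \in edges w -> dd X Y e = false.
  move=> e eE.
  have hp : forall i, i \in edges w -> 0 <= (if dd X Y i then w i.1 i.2 else 0).
    by move=> i iE; case: ifP => // _; apply: ltW; apply: wpos.
  have := psumr_eq0P hp DZ eE.
  by case: ifP => // _ h; have := wpos eE; rewrite h ltxx.
split.
- by rewrite /is_mincut_shore sI /=; apply/forall_inP => Z /mX; rewrite eI.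
- by rewrite /is_mincut_shore sU /=; apply/forall_inP => Z /mX; rewrite eU.
- apply/rowP => j; rewrite !mxE /in_cut.
  have eE := enum_valP j; rewrite eE /=.
  have := nd _ eE; rewrite /dd !inE.
  case: ((enum_val j).1 \in X); case: ((enum_val j).1 \in Y);
  case: ((enum_val j).2 \in X); case: ((enum_val j).2 \in Y);
    rewrite /= ?addr0 ?add0r //.
Qed.



Theorem theorem1 (R : realFieldType) (n : nat) (w : 'I_n -> 'I_n -> R) :
  (2 <= n)%N ->
  (forall x y : 'I_n, w x y = w y x) ->
  (forall x y : 'I_n, x != y -> 0 <= w x y) ->
  (cdim w <= 2 * n - 3)%N.
Proof.
move=> n2 _ _.
have n0 : (0 < n)%N by apply: leq_trans n2.
pose r : 'I_n := Ordinal n0.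
pose M := [set X | is_mincut_shore w X && (r \notin X)].
have Hunc : forall X Y, X \in M -> Y \in M -> cross X Y ->
   [/\ X :&: Y \in M, X :|: Y \in M & chi w X + chi w Y = chi w (X :&: Y) + chi w (X :|: Y)].
  move=> X Y; rewrite !inE => /andP[mX rX] /andP[mY rY] cXY.
  case: (unc mX rX mY rY cXY) => mI mU e.
  split => //; apply/andP; split => //; by rewrite ?negb_and ?negb_or rX ?rY ?orbT.
case: (span_lam Hunc) => L [LM Lc Lspan].
set S := \matrix_(i < #|L|) chi w (enum_val i).
have sub : (mincut_matrix w <= S)%MS.
  apply/row_subP => i; rewrite row_mincut.
  case: ifP => mc; last exact: sub0mx.
  case: (boolP (r \in enum_val i)) => ri.
    rewrite -chi_setC; apply: Lspan.
    by rewrite /M inE mincut_setC // inE ri.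
  by apply: Lspan; rewrite /M inE mc ri.
have rk := leq_trans (mxrankS sub) (rank_leq_row S).
pose U : {set 'I_n} := [set~ r].
have cU : #|U| = n.-1 by rewrite cardsC1 card_ord.
have U0 : U != set0 by rewrite -card_gt0 cU; lia.
have hL : forall X, X \in L -> (X != set0) && (X \subset U).
  move=> X /(subsetP LM); rewrite inE => /andP[/andP[/andP[X0 _] _] rX].
  rewrite X0 /=; apply/subsetP => x xX; rewrite !inE.
  by apply: contraNneq rX => <-.
have := lam_count (leqnn _) U0 hL Lc.
rewrite /cdim cU; move: rk; move: (\rank _) #|L| => a b.
case: (U \notin L) => /=; lia.
Qed.
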